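(* Let $n\ge 1$, $b\in\mathbb{R}^n$, and let $A\in\mathbb{R}^{n\times n}$ be symmetric with all eigenvalues $\lambda_i$ satisfying $0<\lambda_i<2$, $i=1,\dots,n$. Define $g(x)=x-(Ax-b)$ and $f(x)=g(x)-x=-(Ax-b)$. Let $\bar x_k,\bar y_k\in\mathbb{R}^n$ be arbitrary vectors with $\bar y_k\neq\bar x_k$ (so that $f(\bar y_k)-f(\bar x_k)\neq 0$), and define $$\beta_k^\ast=-\frac{\langle f(\bar y_k)-f(\bar x_k),\,f(\bar x_k)\rangle}{\|f(\bar y_k)-f(\bar x_k)\|^2},$$ $$x^0_{k+1}=\bar x_k+\beta_k^\ast(\bar y_k-\bar x_k),\qquad x^1_{k+1}=g(\bar x_k)+\beta_k^\ast\big(g(\bar y_k)-g(\bar x_k)\big).$$ If $f(x^0_{k+1})\neq 0$, then $\|f(x^1_{k+1})\|<\|f(x^0_{k+1})\|$.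
   Context: $\|\cdot\|$ denotes the Euclidean norm on $\mathbb{R}^n$ and $\langle x,y\rangle=x^\intercal y$ the standard inner product. In the paper, $\bar x_k,\bar y_k$ arise as the affine combinations $\sum_i\alpha_i x_{k-m_k+i}$ and $\sum_i\alpha_i g(x_{k-m_k+i})$ (with $\sum_i\alpha_i=1$) computed in an Anderson acceleration step, but the statement holds for arbitrary vectors. *)

(* Defs.v *)
From HB Require Import structures.
From mathcomp Require Import all_boot all_order all_algebra.
From mathcomp Require Import reals.
Set Implicit Arguments. Unset Strict Implicit. Unset Printing Implicit Defensive.
Import Order.TTheory GRing.Theory Num.Theory.
Local Open Scope ring_scope.

Definition dotv (R : realType) (n : nat) (x y : 'cV[R]_n) : R :=
  (x^T *m y) 0 0.

Definition enorm (R : realType) (n : nat) (x : 'cV[R]_n) : R :=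
  Num.sqrt (dotv x x).

Definition gmap (R : realType) (n : nat) (A : 'M[R]_n) (b : 'cV[R]_n)
  (x : 'cV[R]_n) : 'cV[R]_n := x - (A *m x - b).

Definition fmap (R : realType) (n : nat) (A : 'M[R]_n) (b : 'cV[R]_n)
  (x : 'cV[R]_n) : 'cV[R]_n := gmap A b x - x.

(* Main.v *)
Require Import Defs.
From HB Require Import structures.
From mathcomp Require Import all_boot all_order all_algebra.
From mathcomp Require Import classical_sets reals.
From mathcomp Require Import ring lra.
Import Order.TTheory GRing.Theory Num.Theory.
Local Open Scope ring_scope.
Set Implicit Arguments. Unset Strict Implicit. Unset Printing Implicit Defensive.

Section Aux.
Variables (R : realType) (n : nat).
Implicit Types (x y : 'cV[R]_n) (P : 'M[R]_n).

Definition bf P x y : R := (x^T *m P *m y) 0 0.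
Definition Kb P : R := \sum_i \sum_j `|P i j|.

Lemma dotvE x y : dotv x y = \sum_i x i 0 * y i 0.
Proof. by rewrite /dotv mxE; apply: eq_bigr => i _; rewrite mxE. Qed.

Lemma bfE P x y : bf P x y = \sum_i \sum_j x i 0 * P i j * y j 0.
Proof.
rewrite /bf mxE; under eq_bigr => j _ do rewrite mxE big_distrl /=.
rewrite exchange_big /=; apply: eq_bigr => i _; apply: eq_bigr => j _.
by rewrite mxE.
Qed.

Lemma dotv_ge0 x : 0 <= dotv x x.
Proof. by rewrite dotvE sumr_ge0 // => i _; rewrite -expr2 sqr_ge0. Qed.

Lemma dotv_gt0 x : x != 0 -> 0 < dotv x x.
Proof.
move=> nx; rewrite lt_neqAle dotv_ge0 andbT eq_sym; apply: contra nx.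
rewrite dotvE psumr_eq0; last by move=> i _; rewrite -expr2 sqr_ge0.
move=> /allP H; apply/eqP/matrixP => i j; rewrite (ord1 j) mxE.
by have /(_ (mem_index_enum i)) := H i; rewrite /= mulf_eq0 orbb => /eqP.
Qed.

Lemma coord_le x i : x i 0 ^+ 2 <= dotv x x.
Proof.
rewrite dotvE (bigD1 i) //= expr2 lerDl sumr_ge0 // => k _.
by rewrite -expr2 sqr_ge0.
Qed.

Lemma bf_le P x : bf P x x <= Kb P * dotv x x.
Proof.
rewrite bfE /Kb mulr_suml; apply: ler_sum => i _; rewrite mulr_suml.
apply: ler_sum => j _.
have hi := coord_le x i; have hj := coord_le x j.
set a := x i 0 in hi *; set b := x j 0 in hj *; set S := dotv x x in hi hj *.
set p := P i j.
have hab : `|a * b| <= S.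
  have : 2 * `|a * b| <= a ^+ 2 + b ^+ 2.
    rewrite normrM -[a ^+ 2]real_normK ?num_real // -[b ^+ 2]real_normK ?num_real //.
    have := sqr_ge0 (`|a| - `|b|); rewrite sqrrB; lra.
  lra.
have : a * p * b <= `|a * p * b| by apply: ler_norm.
rewrite [a * p]mulrC -mulrA normrM => h; apply: (le_trans h).
by apply: ler_wpM2l.
Qed.


Lemma bf_sym P x y : P^T = P -> bf P x y = bf P y x.
Proof.
move=> sP; rewrite /bf.
have h :  (y^T *m P *m x) 0 0 = ((y^T *m P *m x)^T) 0 0 by rewrite [RHS]mxE.
rewrite [RHS]h.
by rewrite !trmx_mul trmxK sP mulmxA.
Qed.

Lemma bf_expand P x y (t : R) :
  bf P (x + t *: y) (x + t *: y) =
  bf P x x + t * bf P x y + t * bf P y x + t ^+ 2 * bf P y y.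
Proof.
rewrite /bf.
have -> : (x + t *: y)^T = x^T + t *: y^T by rewrite raddfD /= linearZ.
rewrite !mulmxDl !mulmxDr -!scalemxAl -!scalemxAr.
rewrite !scalerA.
set a := x^T *m P *m x; set b := x^T *m P *m y; set c := y^T *m P *m x;
set d := y^T *m P *m y.
rewrite !mxE; ring.
Qed.

Lemma psd_unit_lb N : N^T = N -> N \in unitmx -> (forall x, 0 <= bf N x x) ->
  exists K : R, 0 < K /\ forall x, dotv x x <= K * bf N x x.
Proof.
move=> sN uN psd; exists (Kb (invmx N) + 1); split.
  rewrite ltr_pwDr // /Kb sumr_ge0 // => i _; exact: sumr_ge0.
move=> x; set y := invmx N *m x.
have e1 : bf N x y = dotv x x by rewrite /bf /dotv -mulmxA mulKVmx.
have e2 : bf N y x = dotv x x by rewrite -bf_sym.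
have e3 : bf N y y = bf (invmx N) x x.
  by rewrite /bf -mulmxA mulKVmx // /y trmx_mul trmx_inv sN.
have hb := bf_le (invmx N) x.
have hS := dotv_ge0 x.
set K := Kb (invmx N) in hb *.
have hK : 0 <= K by rewrite /K /Kb sumr_ge0 // => i _; exact: sumr_ge0.
have := psd (x + (- (K + 1)^-1) *: y); rewrite bf_expand e1 e2 e3.
set q := bf N x x; set S := dotv x x; set Q := bf (invmx N) x x in hb *.
set u := (K + 1)^-1.
have hu : u * (K + 1) = 1 by rewrite mulVf // gt_eqF // ltr_pwDr.
have hu0 : 0 < u by rewrite invr_gt0 ltr_pwDr.
move=> h.
(* 0 <= q - 2uS + u^2 Q, Q <= K S, so 0 <= q - 2uS + u^2 K S <= q - uS *)
have h2 : u ^+ 2 * Q <= u ^+ 2 * (K * S) by rewrite ler_wpM2l // sqr_ge0.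
have h3 : u ^+ 2 * (K * S) <= u * S.
  have -> : u ^+ 2 * (K * S) = u * S * (u * K) by ring.
  rewrite ler_piMr // ?mulr_ge0 // ?ltW //.
  have : u * K = 1 - u by rewrite -hu; ring.
  move=> ->; lra.
have : u * S <= q by lra.
move=> h4.
have : (K + 1) * (u * S) <= (K + 1) * q by rewrite ler_wpM2l // addr_ge0.
by rewrite mulrA (mulrC (K+1)) hu mul1r.
Qed.


Lemma bf_scalar (m : R) P x : bf (m%:M - P) x x = m * dotv x x - bf P x x.
Proof.
rewrite /bf /dotv mulmxBr mulmxBl mul_mx_scalar -scalemxAl.
set a := x^T *m x; set c := x^T *m P *m x.
by rewrite !mxE.
Qed.

Lemma bf0 P : bf P 0 0 = 0.
Proof. by rewrite /bf mulmx0 mxE. Qed.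

Lemma quad_id (C : 'M[R]_n) (w : 'rV[R]_n) (s : R) :
  (w *m (C - s%:M)) *m C = - s *: (w *m (C - s%:M)) + w *m (C *m C) - (s * s) *: w.
Proof.
rewrite mulmxBr !mulmxBl !mul_mx_scalar -scalemxAl mulmxA.
set a := w *m C *m C; set c := w *m C.
apply/matrixP => i j; rewrite !mxE; ring.
Qed.

Lemma key (A : 'M[R]_n) (hn : (0 < n)%N) : A^T = A ->
  (forall l : R, eigenvalue A l -> 0 < l < 2) ->
  forall v : 'cV[R]_n, v != 0 ->
  dotv ((1%:M - A) *m v) ((1%:M - A) *m v) < dotv v v.
Proof.
move=> sA heig.
set C := 1%:M - A.
have sC : C^T = C by rewrite /C raddfB /= trmx1 sA.
set M := C *m C.
have sM : M^T = M by rewrite /M trmx_mul sC.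
have qM v : dotv (C *m v) (C *m v) = bf M v v.
  by rewrite /dotv /bf trmx_mul sC !mulmxA.
pose E : R -> Prop := fun r => exists2 v : 'cV[R]_n, v != 0 & r = bf M v v / dotv v v.
have v1 : (const_mx 1 : 'cV[R]_n) != 0.
  apply/eqP => /matrixP /(_ (Ordinal hn) 0); rewrite !mxE => /eqP.
  by rewrite oner_eq0.
set one := (const_mx 1 : 'cV[R]_n) in v1.
have En0 : exists r, E r by exists (bf M one one / dotv one one); exists one.
have Eub : has_ubound E.
  rewrite /has_ubound /ubound /=.
  exists (Kb M); move=> r [v nv ->].
  by rewrite ler_pdivrMr ?dotv_gt0 // bf_le.
set mu := sup E.
have Emu : forall v, v != 0 -> bf M v v <= mu * dotv v v.
  move=> v nv; rewrite -ler_pdivrMr ?dotv_gt0 //.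
  by apply: (ub_le_sup Eub); exists v.
set N := mu%:M - M.
have sN : N^T = N by rewrite /N raddfB /= tr_scalar_mx sM.
have psd : forall v, 0 <= bf N v v.
  move=> v; have [->|nv] := eqVneq v 0; first by rewrite bf0.
  by rewrite bf_scalar subr_ge0 Emu.
have mu0 : 0 <= mu.
  have [r Er] := En0; apply: le_trans (ub_le_sup Eub Er).
  case: Er => v nv ->; rewrite divr_ge0 ?dotv_ge0 //.
  by rewrite -qM dotv_ge0.
have nuN : N \notin unitmx.
  apply/negP => uN; have [K [K0 HK]] := psd_unit_lb sN uN psd.
  have : mu <= mu - K^-1.
    apply: ge_sup => //; move=> r [v nv ->].
    rewrite ler_pdivrMr ?dotv_gt0 //.
    have := HK v; rewrite bf_scalar => h.
    have hS := dotv_gt0 nv.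
    have h' : K^-1 * dotv v v <= mu * dotv v v - bf M v v.
      by rewrite ler_pdivrMl.
    rewrite mulrBl; lra.
  have : 0 < K^-1 by rewrite invr_gt0.
  lra.
have eigM : eigenvalue M mu.
  rewrite /eigenvalue /eigenspace kermx_eq0 row_free_unit.
  apply: contra nuN => uX; have [] := @mulmx1_unit _ _ N (- invmx (M - mu%:M)).
    by rewrite /N mulmxN -mulNmx opprB mulmxV.
  by [].
have [w wM nw] := eigenvalueP eigM.
set s := Num.sqrt mu.
have s0 : 0 <= s by rewrite sqrtr_ge0.
have ss : s * s = mu by rewrite -expr2 sqr_sqrtr.
have s1 : s < 1.
  set u := w *m (C - s%:M).
  have uC : u *m C = - s *: u + w *m M - mu *: w.
    by rewrite /u quad_id ss.
  rewrite wM addrK in uC.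
  have [u0|nu] := eqVneq u 0.
    have : w *m A = (1 - s) *: w.
      move: u0; rewrite /u mulmxBr mul_mx_scalar => /eqP; rewrite subr_eq0.
      move=> /eqP wC; move: wC; rewrite /C mulmxBr mulmx1 => wC.
      have -> : w *m A = w - (w - w *m A) by rewrite opprB addrC subrK.
      by rewrite wC scalerBl scale1r.
    move=> h; have /heig /andP[h1 _] : eigenvalue A (1 - s).
      by apply/eigenvalueP; exists w.
    lra.
  have : u *m A = (1 + s) *: u.
    move: uC; rewrite /C mulmxBr mulmx1 => uC.
    have -> : u *m A = u - (u - u *m A) by rewrite opprB addrC subrK.
    by rewrite uC scalerDl scale1r scaleNr opprK.
  move=> h; have /heig /andP[_ h2] : eigenvalue A (1 + s).
    by apply/eigenvalueP; exists u.
  lra.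
have mu1 : mu < 1 by rewrite -ss; nra.
move=> v nv; rewrite qM.
apply: (le_lt_trans (Emu v nv)).
have := dotv_gt0 nv; nra.
Qed.

End Aux.

Lemma gmap_aff (R : realType) (n : nat) (A : 'M[R]_n) (b x y : 'cV[R]_n) (c : R) :
  gmap A b x + c *: (gmap A b y - gmap A b x) = gmap A b (x + c *: (y - x)).
Proof.
rewrite /gmap; do 3! rewrite ?mulmxDr ?mulmxBr ?mulmxN -?scalemxAr.
move: (A *m x) (A *m y) => ax ay.
apply/matrixP => i j; rewrite !mxE; ring.
Qed.

Lemma fmap_gmap (R : realType) (n : nat) (A : 'M[R]_n) (b z : 'cV[R]_n) :
  fmap A b (gmap A b z) = (1%:M - A) *m fmap A b z.
Proof.
rewrite /fmap /gmap; do 3! rewrite ?mulmxBr ?mulmxDr ?mulmxBl ?mul1mx.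
rewrite ?mulmxN.
move: (A *m (A *m z)) (A *m z) (A *m b) => aaz az ab.
apply/matrixP => i j; rewrite !mxE; ring.
Qed.

Theorem theorem1 (R : realType) (n : nat) (hn : (0 < n)%N)
  (A : 'M[R]_n) (b : 'cV[R]_n)
  (hsym : A^T = A)
  (heig : forall l : R, eigenvalue A l -> 0 < l < 2)
  (xbar ybar : 'cV[R]_n) (hxy : ybar != xbar) :
  let df := fmap A b ybar - fmap A b xbar in
  let beta := - (dotv df (fmap A b xbar) / enorm df ^+ 2) in
  let x0 := xbar + beta *: (ybar - xbar) in
  let x1 := gmap A b xbar + beta *: (gmap A b ybar - gmap A b xbar) in
  fmap A b x0 != 0 ->
  enorm (fmap A b x1) < enorm (fmap A b x0).
Proof.
move=> df beta x0 x1 nz.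
have -> : x1 = gmap A b x0 by rewrite /x1 gmap_aff.
rewrite fmap_gmap /enorm ltr_sqrt ?dotv_gt0 //.
exact: key.
Qed.
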